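(* Let $\mathcal{T}$ be an increasing tree of depth $D$, i.e. $c(u)\le c(v)$ whenever $u$ is an ancestor of $v$. Then the online algorithm \textsc{Noadd} is $D$-competitive for MLAPD on $\mathcal{T}$: for every request set $\mathcal{R}$, the total cost of the schedule produced by \textsc{Noadd} is at most $D$ times the cost of an optimal (offline) schedule.
   Context: Multi-level aggregation problem with deadlines (MLAPD): an instance is a rooted tree $\mathcal{T}$ with root $r$ and positive node costs $c(v)>0$, together with a set $\mathcal{R}$ of requests $\rho=(v,a,d)$, each issued at a node $v$, with arrival time $a$ and deadline $d\ge a$ (deadlines are assumed distinct). A service is a pair $(S,t)$ where $S$ is a subtree of $\mathcal{T}$ containing $r$ (so if $v\in S$ then all ancestors of $v$ are in $S$) and $t$ is the transmission time; it costs $c(S)=\sum_{u\in S}c(u)$. A request $(v,a,d)$ is satisfied by $(S,t)$ if $v\in S$ and $a\le t\le d$. A schedule is a set of services; it is feasible if every request is satisfied by some service; its cost is the sum of its services' costs. Online: requests are revealed at their arrival times, the tree is known in advance. The depth $D$ is the maximum number of nodes on a root-to-leaf path. For a request $\rho$ issued at $v$, $P_\rho$ denotes the set of nodes on the path from $r$ to $v$. An algorithm is $c$-competitive if its cost is at most $c$ times the optimal cost on every instance. \textsc{Noadd}: whenever a request $\rho$ that has not yet been satisfied by a previous transmission reaches its deadline $d_\rho$, it transmits the service $(P_\rho,d_\rho)$ and nothing else. *)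

(* Defs.v *)
From HB Require Import structures.
From mathcomp Require Import all_boot all_order all_algebra.
Set Implicit Arguments. Unset Strict Implicit. Unset Printing Implicit Defensive.
Import Order.TTheory GRing.Theory Num.Theory.
Local Open Scope ring_scope.

Section MLAPD.
Variables (R : realFieldType) (V : finType).

(* A rooted tree on the finite node set V is given by a parent function [par]
   and a root [r]: the root is its own parent and every node reaches the root
   by iterating [par]. *)
Definition is_rooted_tree (par : V -> V) (r : V) : Prop :=
  par r = r /\ forall v, exists k : nat, iter k par v = r.

(* u is an ancestor of v (or v itself).  Reachability by iterating a function
   on a finite type is always witnessed within #|V| steps. *)
Definition ancestor (par : V -> V) (u v : V) : bool :=
  [exists k : 'I_#|V|, iter k par v == u].

Definition root_path (par : V -> V) (v : V) : {set V} :=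
  [set u | ancestor par u v].

Definition depth (par : V -> V) : nat := \max_(v : V) #|root_path par v|.

Definition increasing_tree (par : V -> V) (c : V -> R) : Prop :=
  forall u v, ancestor par u v -> c u <= c v.

Definition request := (V * R * R)%type.
Definition req_node (q : request) : V := q.1.1.
Definition req_arr (q : request) : R := q.1.2.
Definition req_dl (q : request) : R := q.2.

Definition service := ({set V} * R)%type.

Definition valid_service (par : V -> V) (r : V) (s : service) : Prop :=
  r \in s.1 /\ forall u v, ancestor par u v -> v \in s.1 -> u \in s.1.

Definition satisfies (s : service) (q : request) : bool :=
  (req_node q \in s.1) && (req_arr q <= s.2 <= req_dl q).

Definition schedule := seq service.

Definition feasible (sch : schedule) (rs : seq request) : bool :=
  all (fun q => has (fun s => satisfies s q) sch) rs.

Definition service_cost (c : V -> R) (s : service) : R := \sum_(u in s.1) c u.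

Definition schedule_cost (c : V -> R) (sch : schedule) : R :=
  \sum_(s <- sch) service_cost c s.

Definition noadd (par : V -> V) (rs : seq request) : schedule :=
  foldl (fun sch q =>
           if has (fun s => satisfies s q) sch then sch
           else rcons sch (root_path par (req_node q), req_dl q))
        [::] (sort (fun q1 q2 : request => req_dl q1 <= req_dl q2) rs).

End MLAPD.

(* Main.v *)
Require Import Defs.
From HB Require Import structures.
From mathcomp Require Import all_boot all_order all_algebra.
Import Order.TTheory GRing.Theory Num.Theory.
Local Open Scope ring_scope.

Section Aux.
Variables (R : realFieldType) (V : finType) (par : V -> V).

Definition gserv (q : request R V) : service R V :=
  (root_path par (req_node q), req_dl q).

Definition critf (Q : seq (request R V)) (q : request R V) :=
  if has (fun q' => satisfies (gserv q') q) Q then Q else rcons Q q.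

Definition nstep (sch : schedule R V) (q : request R V) :=
  if has (fun s => satisfies s q) sch then sch
  else rcons sch (root_path par (req_node q), req_dl q).

Lemma crit_map Q0 s :
  map gserv (foldl critf Q0 s) = foldl nstep (map gserv Q0) s.
Proof.
elim: s Q0 => [|x s IH] Q0 //=.
rewrite IH /critf /nstep has_map.
by case: ifP => _ //; rewrite map_rcons.
Qed.

Definition nsat (q1 q2 : request R V) := ~~ satisfies (gserv q1) q2.

Lemma crit_pairwise Q0 s :
  pairwise nsat Q0 -> pairwise nsat (foldl critf Q0 s).
Proof.
elim: s Q0 => [|x s IH] Q0 //= H.
apply: IH; rewrite /critf; case: ifP => // Hh.
rewrite pairwise_rcons H andbT all_predC.
by rewrite Hh.
Qed.

Lemma crit_subseq Q0 s : subseq (foldl critf Q0 s) (Q0 ++ s).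
Proof.
elim: s Q0 => [|x s IH] Q0 /=; first by rewrite cats0.
rewrite /critf; case: ifP => _.
  apply: subseq_trans (IH Q0) _.
  by rewrite subseq_cat2l subseq_cons.
by rewrite -cat_rcons.
Qed.

Lemma filter_pw (T : Type) (r1 r2 r3 : rel T) (p : pred T) (l : seq T) :
  (forall x y, p x -> p y -> r1 x y -> r2 x y -> r3 x y) ->
  pairwise r1 l -> pairwise r2 l -> pairwise r3 (filter p l).
Proof.
move=> H; elim: l => [|x l IH] //.
rewrite !pairwise_cons => /andP[A1 P1] /andP[A2 P2].
rewrite /=; case: ifP => px; last exact: IH.
rewrite pairwise_cons IH // andbT all_filter.
have : all (predI (r1 x) (r2 x)) l by rewrite all_predI A1 A2.
apply: sub_all => y /andP[h1 h2]; apply/implyP => py; exact: H.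
Qed.

Lemma self_anc (v : V) : ancestor par v v.
Proof.
have H0 : (0 < #|V|)%N by apply/card_gt0P; exists v.
by apply/existsP; exists (Ordinal H0).
Qed.

Lemma sum_uniq_le (c : V -> R) (l : seq V) (A : {set V}) :
  (forall v, 0 <= c v) -> uniq l -> {subset l <= A} ->
  \sum_(u <- l) c u <= \sum_(u in A) c u.
Proof.
move=> c0 ul sub.
rewrite big_uniq // (bigID (fun u => u \in l) (fun u => u \in A)) /=.
have -> : \sum_(i in A | i \in l) c i = \sum_(i in l) c i.
  apply: eq_bigl => i; apply/andP/idP => [[]//|il]; split=> //; exact: sub.
rewrite lerDl; apply: sumr_ge0 => i _; exact: c0.
Qed.

End Aux.
Arguments gserv {R V}. Arguments critf {R V}. Arguments nsat {R V}.
Arguments crit_map {R V}. Arguments crit_pairwise {R V}. Arguments crit_subseq {R V}.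
Arguments self_anc {V}. Arguments nstep {R V}.

Theorem mainTheorem1 (R : realFieldType) (V : finType) (par : V -> V) (r : V)
    (c : V -> R) (rs : seq (request R V)) :
  is_rooted_tree par r ->
  (forall v, 0 < c v) ->
  increasing_tree par c ->
  (forall q, q \in rs -> req_arr q <= req_dl q) ->
  uniq (map (@req_dl R V) rs) ->
  forall sch : schedule R V,
    (forall s, s \in sch -> valid_service par r s) ->
    feasible sch rs ->
    schedule_cost c (noadd par rs) <= (depth par)%:R * schedule_cost c sch.
Proof.
move=> _ cpos incr _ _ sch _ feas.
have c0 : forall v, 0 <= c v by move=> v; exact: ltW.
set leT := (fun q1 q2 : request R V => req_dl q1 <= req_dl q2).
set s := sort leT rs.
set Q := foldl (critf par) [::] s.
have -> : noadd par rs = map (gserv par) Q.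
  by rewrite /Q crit_map.
have trT : transitive leT by move=> a b d; exact: le_trans.
have toT : total leT by move=> a b; exact: le_total.
have subQ : subseq Q s by have := crit_subseq par [::] s.
have QinR : forall q, q \in Q -> q \in rs.
  by move=> q /(mem_subseq subQ); rewrite mem_sort.
have pwle : pairwise leT Q.
  rewrite -sorted_pairwise //; apply: subseq_sorted subQ _ => //.
  exact: sort_sorted.
have pwns : pairwise (nsat par) Q by apply: crit_pairwise.
rewrite /schedule_cost big_map.
apply: (@le_trans _ _ (\sum_(q <- Q) (depth par)%:R * c (req_node q))).
  apply: ler_sum => q _; rewrite /service_cost /gserv /=.
  apply: (@le_trans _ _ (\sum_(u in root_path par (req_node q)) c (req_node q))).
    apply: ler_sum => u; rewrite inE; exact: incr.
  rewrite sumr_const -[_ *+ #|_|]mulr_natl; apply: (ler_wpM2r (c0 _)); rewrite ler_nat.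
  exact: (@leq_bigmax _ (fun v => #|root_path par v|)).
rewrite -mulr_sumr; apply: (ler_wpM2l (ler0n _ _)).
apply: (@le_trans _ _ (\sum_(q <- Q) \sum_(sv <- sch)
          (if satisfies sv q then c (req_node q) else 0))).
  rewrite big_seq [X in _ <= X]big_seq; apply: ler_sum => q qQ.
  have /hasP [sv svin sat] := allP feas q (QinR q qQ).
  rewrite (big_rem sv svin) /= sat lerDl.
  by apply: sumr_ge0 => i _; case: ifP.
rewrite exchange_big /=; apply: ler_sum => sv _.
rewrite -big_mkcond /= -big_filter.
have -> : forall l : seq (request R V), \sum_(q <- l) c (req_node q) = \sum_(u <- map (@req_node R V) l) c u by move=> l; rewrite big_map.
rewrite /service_cost.
apply: sum_uniq_le => //.
  rewrite uniq_pairwise pairwise_map.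
  apply: (@filter_pw _ _ _ _ _ _ _ pwle pwns) => q1 q2 s1 s2 le12 ns.
  apply/eqP => e; move/negP: ns; apply.
  rewrite /satisfies /gserv /= -e inE self_anc /=.
  move/andP: s1 => [_ /andP[_ t1]]; move/andP: s2 => [_ /andP[a2 _]].
  by rewrite (le_trans a2 t1) (le12 : req_dl q1 <= req_dl q2).
move=> u /mapP [q]; rewrite mem_filter => /andP[sq _] ->.
by case/andP: sq.
Qed.
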